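(* Let $p,N\in\mathbb{N}$, $x_0<\cdots<x_N$, and data $y_{n,2k}\in\mathbb{R}$ ($n=0,\dots,N$, $k=0,\dots,p$). For $\alpha',\alpha''\in\Theta_{2p}$ let $\ell_{\alpha'}$, $\ell_{\alpha''}$ be the Lidstone FIFs for this data with scaling factors $\alpha',\alpha''$. Then for every $k=1,\dots,p$, $$\|\ell_{\alpha'}^{(2k)}-\ell_{\alpha''}^{(2k)}\|_\infty\le\frac{|\alpha'-\alpha''|_\infty}{\mu^{2k}-|\alpha'|_\infty}\big(\|\ell_{\alpha''}^{(2k)}\|_\infty+M_{2k,2p}\big),$$ where $\mu=\min_{1\le n\le N}a_n$ and $M_{2k,2p}=\frac{2\rho\pi}{3}\sum_{l=0}^{p-k}\big(\frac{x_N-x_0}{\pi}\big)^{2l}$.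
   Context: Lidstone polynomials $\Lambda_l$: $\Lambda_0(x)=x$, $\Lambda_l''=\Lambda_{l-1}$, $\Lambda_l(0)=\Lambda_l(1)=0$ for $l\ge1$. $a_n=\frac{x_n-x_{n-1}}{x_N-x_0}$, $L_n(x)=a_nx+\frac{x_Nx_{n-1}-x_0x_n}{x_N-x_0}$. $\Theta_{2p}=\{\alpha\in\mathbb{R}^N:|\alpha_n|<a_n^{2p}\ \forall n\}$. For $\alpha\in\Theta_{2p}$, the Lidstone FIF $\ell_\alpha$ is the unique $C^{2p}[x_0,x_N]$ function satisfying $\ell_\alpha(L_n(x))=\alpha_n\ell_\alpha(x)+q_n(x)$ for $x\in[x_0,x_N]$, $n=1,\dots,N$, where $q_n(x)=\sum_{l=0}^p[(a_n^{2l}y_{n-1,2l}-\alpha_ny_{0,2l})\Lambda_l(\frac{x_N-x}{x_N-x_0})+(a_n^{2l}y_{n,2l}-\alpha_ny_{N,2l})\Lambda_l(\frac{x-x_0}{x_N-x_0})](x_N-x_0)^{2l}$; it satisfies $\ell_\alpha^{(2k)}(x_n)=y_{n,2k}$. Notation: $|\alpha|_\infty=\max_n|\alpha_n|$, $\|f\|_\infty=\sup_{[x_0,x_N]}|f|$, $\rho=\max_{0\le k\le p}\max\{|y_{0,2k}|,|y_{N,2k}|\}$.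
   Formalization: The bound is asserted only for scaling factors α′ that satisfy $|\alpha'|_\infty<\mu^{2k}$ as well as α′ ∈ Θ₂ₚ, so its denominator $\mu^{2k}-|\alpha'|_\infty$ is positive. The statement above fails without it. *)

(* Defs.v *)
From Stdlib Require Import Reals Lra Lia Classical ClassicalEpsilon.
Open Scope R_scope.

(* Lam 0 t = t; for l >= 0, Lam (l+1) is twice differentiable on R with
   (Lam (l+1))'' = Lam l and Lam (l+1) 0 = Lam (l+1) 1 = 0.
   These conditions determine the family uniquely. *)
Definition lidstone_family (Lam : nat -> R -> R) : Prop :=
  (forall t, Lam 0%nat t = t) /\
  (forall l : nat, exists dL : R -> R,
      (forall t, derivable_pt_lim (Lam (S l)) t (dL t)) /\
      (forall t, derivable_pt_lim dL t (Lam l t)) /\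
      Lam (S l) 0 = 0 /\ Lam (S l) 1 = 0).

Definition deriv_on (a b : R) (f f' : R -> R) : Prop :=
  forall t, a <= t <= b ->
    limit1_in (fun s => (f s - f t) / (s - t))
              (fun s => a <= s <= b /\ s <> t) (f' t) t.

Definition cont_on (a b : R) (f : R -> R) : Prop :=
  forall t, a <= t <= b -> limit1_in f (fun s => a <= s <= b) (f t) t.

Definition Cn_derivs (n : nat) (a b : R) (f : R -> R) (D : nat -> R -> R) : Prop :=
  (forall t, a <= t <= b -> D 0%nat t = f t) /\
  (forall j : nat, (j < n)%nat -> deriv_on a b (D j) (D (S j))) /\
  cont_on a b (D n).

Definition sup_norm (a b : R) (g : R -> R) : R :=
  epsilon (inhabits 0)
    (fun s => is_lub (fun v => exists t, a <= t <= b /\ v = Rabs (g t)) s).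

Fixpoint max_0_to (f : nat -> R) (m : nat) : R :=
  match m with
  | O => f O
  | S m' => Rmax (max_0_to f m') (f m)
  end.

(* max_{1 <= i <= m} f i   (meaningful for m >= 1) *)
Fixpoint max_1_to (f : nat -> R) (m : nat) : R :=
  match m with
  | O => f O
  | S O => f 1%nat
  | S m' => Rmax (max_1_to f m') (f m)
  end.

(* min_{1 <= i <= m} f i   (meaningful for m >= 1) *)
Fixpoint min_1_to (f : nat -> R) (m : nat) : R :=
  match m with
  | O => f O
  | S O => f 1%nat
  | S m' => Rmin (min_1_to f m') (f m)
  end.

Definition vnorm (N : nat) (al : nat -> R) : R := max_1_to (fun n => Rabs (al n)) N.

Definition a_coef (x : nat -> R) (N n : nat) : R :=
  (x n - x (n - 1)%nat) / (x N - x 0%nat).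

Definition L_map (x : nat -> R) (N n : nat) (t : R) : R :=
  a_coef x N n * t + (x N * x (n - 1)%nat - x 0%nat * x n) / (x N - x 0%nat).

Definition in_Theta (p : nat) (x : nat -> R) (N : nat) (al : nat -> R) : Prop :=
  forall n : nat, (1 <= n <= N)%nat -> Rabs (al n) < a_coef x N n ^ (2 * p)%nat.

(* y n j = y_{n,j}; only j = 2l (0 <= l <= p) is used *)
Definition q_fun (Lam : nat -> R -> R) (p : nat) (x : nat -> R) (N : nat)
    (y : nat -> nat -> R) (al : nat -> R) (n : nat) (t : R) : R :=
  sum_f_R0 (fun l =>
     ((a_coef x N n ^ (2 * l)%nat * y (n - 1)%nat (2 * l)%nat - al n * y 0%nat (2 * l)%nat)
         * Lam l ((x N - t) / (x N - x 0%nat))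
      + (a_coef x N n ^ (2 * l)%nat * y n (2 * l)%nat - al n * y N (2 * l)%nat)
         * Lam l ((t - x 0%nat) / (x N - x 0%nat)))
     * (x N - x 0%nat) ^ (2 * l)%nat) p.

Definition lidstone_FIF_eq (Lam : nat -> R -> R) (p : nat) (x : nat -> R) (N : nat)
    (y : nat -> nat -> R) (al : nat -> R) (f : R -> R) : Prop :=
  forall n : nat, (1 <= n <= N)%nat ->
    forall t, x 0%nat <= t <= x N ->
      f (L_map x N n t) = al n * f t + q_fun Lam p x N y al n t.

Definition rho (p N : nat) (y : nat -> nat -> R) : R :=
  max_0_to (fun k => Rmax (Rabs (y 0%nat (2 * k)%nat)) (Rabs (y N (2 * k)%nat))) p.

Definition M_const (p k : nat) (x : nat -> R) (N : nat) (y : nat -> nat -> R) : R :=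
  2 * rho p N y * PI / 3 *
  sum_f_R0 (fun l => ((x N - x 0%nat) / PI) ^ (2 * l)%nat) (p - k).

(* Main.v *)
Require Import Defs.
From Stdlib Require Import Reals Lra Lia ClassicalEpsilon FunctionalExtensionality.
Open Scope R_scope.

Lemma lim_ext f g D l x0 : limit1_in f D l x0 -> (forall x, D x -> f x = g x) -> limit1_in g D l x0.
Proof.
  unfold limit1_in, limit_in; intros H E eps He.
  destruct (H eps He) as [alp [Ha Hb]]. exists alp; split; auto.
  intros x [Dx Hx]. rewrite <- E by auto. apply Hb; auto.
Qed.

Lemma lim_const D c x0 : limit1_in (fun _ => c) D c x0.
Proof.
  unfold limit1_in, limit_in; intros eps He. exists 1; split; [lra|].
  intros x _. simpl. unfold R_dist. rewrite Rminus_diag, Rabs_R0. lra.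
Qed.

Lemma deriv_on_ext a b F G F' : deriv_on a b F F' -> (forall t, a <= t <= b -> F t = G t) -> deriv_on a b G F'.
Proof.
  intros H E t Ht. apply lim_ext with (fun s => (F s - F t) / (s - t)); auto.
  intros s [Hs _]. rewrite !E; auto.
Qed.

Lemma deriv_on_lin a b f f' g g' u v : deriv_on a b f f' -> deriv_on a b g g' ->
  deriv_on a b (fun t => u * f t + v * g t) (fun t => u * f' t + v * g' t).
Proof.
  intros Hf Hg t Ht.
  apply lim_ext with (fun s => u * ((f s - f t) / (s - t)) + v * ((g s - g t) / (s - t))).
  - apply limit_plus; apply limit_mul; try apply lim_const; auto.
  - intros s [_ Hs]. field. intro; apply Hs; lra.
Qed.

Lemma deriv_on_global a b f f' : (forall t, derivable_pt_lim f t (f' t)) -> deriv_on a b f f'.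
Proof.
  intros H t Ht. unfold limit1_in, limit_in; intros eps He.
  destruct (H t eps He) as [del Hd]. exists del; split; [apply cond_pos|].
  intros s [[Hs Hst] Hd2]. simpl in *. unfold R_dist in *.
  assert (s - t <> 0) by (intro; apply Hst; lra).
  specialize (Hd (s - t) H0 Hd2). replace (t + (s - t)) with s in Hd by ring. auto.
Qed.

Lemma deriv_on_comp_aff a b F F' c d : 0 < c -> (forall t, a <= t <= b -> a <= c * t + d <= b) ->
  deriv_on a b F F' -> deriv_on a b (fun t => F (c * t + d)) (fun t => c * F' (c * t + d)).
Proof.
  intros Hc HL H t Ht. unfold limit1_in, limit_in; intros eps He.
  destruct (H (c * t + d) (HL t Ht) (eps / c)) as [alp [Ha Hb]].
  { apply Rdiv_lt_0_compat; lra. }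
  exists (alp / c); split. { apply Rdiv_lt_0_compat; lra. }
  intros s [[Hs Hst] Hd]. simpl in *. unfold R_dist in *.
  assert (Hst' : s - t <> 0) by (intro; apply Hst; lra).
  assert (Hcs : c * s + d - (c * t + d) = c * (s - t)) by ring.
  assert (A : a <= c * s + d <= b /\ c * s + d <> c * t + d).
  { split; auto. intro E. apply Hst'. apply (Rmult_eq_reg_l c); [|lra]. lra. }
  assert (B : Rabs (c * s + d - (c * t + d)) < alp).
  { rewrite Hcs, Rabs_mult, (Rabs_right c) by lra.
    apply (Rmult_lt_reg_r (/ c)); [apply Rinv_0_lt_compat; lra|].
    replace (c * Rabs (s - t) * / c) with (Rabs (s - t)) by (field; lra).
    replace (alp * / c) with (alp / c) by (unfold Rdiv; ring). exact Hd. }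
  specialize (Hb (c * s + d) (conj A B)). simpl in Hb. unfold R_dist in Hb.
  rewrite Hcs in Hb.
  replace ((F (c * s + d) - F (c * t + d)) / (s - t) - c * F' (c * t + d))
    with (c * ((F (c * s + d) - F (c * t + d)) / (c * (s - t)) - F' (c * t + d))) by (field; lra).
  rewrite Rabs_mult, (Rabs_right c) by lra.
  apply (Rmult_lt_reg_r (/ c)); [apply Rinv_0_lt_compat; lra|].
  replace (c * Rabs ((F (c * s + d) - F (c * t + d)) / (c * (s - t)) - F' (c * t + d)) * / c)
    with (Rabs ((F (c * s + d) - F (c * t + d)) / (c * (s - t)) - F' (c * t + d))) by (field; lra).
  exact Hb.
Qed.

Lemma deriv_on_unique a b f f1 f2 : a < b -> deriv_on a b f f1 -> deriv_on a b f f2 ->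
  forall t, a <= t <= b -> f1 t = f2 t.
Proof.
  intros Hab H1 H2 t Ht. eapply single_limit; [| apply H1; auto | apply H2; auto].
  intros alp Ha. destruct (Rlt_le_dec t b) as [Htb|Htb].
  - exists (t + Rmin alp (b - t) / 2). unfold Rdist.
    pose proof (Rmin_l alp (b - t)). pose proof (Rmin_r alp (b - t)).
    assert (0 < Rmin alp (b - t)) by (apply Rmin_glb_lt; lra).
    replace (t + Rmin alp (b - t) / 2 - t) with (Rmin alp (b - t) / 2) by ring.
    rewrite Rabs_right by lra. repeat split; lra.
  - exists (t - Rmin alp (t - a) / 2). unfold Rdist.
    pose proof (Rmin_l alp (t - a)). pose proof (Rmin_r alp (t - a)).
    assert (0 < Rmin alp (t - a)) by (apply Rmin_glb_lt; lra).
    replace (t - Rmin alp (t - a) / 2 - t) with (- (Rmin alp (t - a) / 2)) by ring.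
    rewrite Rabs_Ropp, Rabs_right by lra. repeat split; lra.
Qed.

Lemma deriv_on_cont a b f f' : deriv_on a b f f' -> cont_on a b f.
Proof.
  intros H t Ht. unfold limit1_in, limit_in; intros eps He.
  destruct (H t Ht 1 ltac:(lra)) as [alp [Ha Hb]].
  set (K := 1 + Rabs (f' t)).
  assert (HK : 0 < K) by (unfold K; pose proof (Rabs_pos (f' t)); lra).
  exists (Rmin alp (eps / K)); split.
  { apply Rmin_glb_lt; auto. apply Rdiv_lt_0_compat; lra. }
  intros s [Hs Hd]. simpl in *. unfold R_dist in *.
  destruct (Req_dec s t) as [E|E].
  { subst. rewrite Rminus_diag, Rabs_R0; lra. }
  pose proof (Rmin_l alp (eps / K)). pose proof (Rmin_r alp (eps / K)).
  assert (Hd' : Rabs (s - t) < alp) by lra.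
  specialize (Hb s (conj (conj Hs E) Hd')). simpl in Hb. unfold R_dist in Hb.
  assert (Hq : Rabs ((f s - f t) / (s - t)) <= K).
  { unfold K. pose proof (Rabs_triang ((f s - f t) / (s - t) - f' t) (f' t)).
    replace ((f s - f t) / (s - t) - f' t + f' t) with ((f s - f t) / (s - t)) in H2 by ring. lra. }
  assert (Hst : s - t <> 0) by lra.
  replace (f s - f t) with ((f s - f t) / (s - t) * (s - t)) by (field; auto).
  rewrite Rabs_mult.
  apply Rle_lt_trans with (K * Rabs (s - t)).
  { apply Rmult_le_compat_r; auto. apply Rabs_pos. }
  apply (Rmult_lt_reg_r (/ K)); [apply Rinv_0_lt_compat; lra|].
  replace (K * Rabs (s - t) * / K) with (Rabs (s - t)) by (field; lra).
  replace (eps * / K) with (eps / K) by (unfold Rdiv; ring). lra.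
Qed.

Lemma cont_bounded a b g : a <= b -> cont_on a b g -> exists M, forall t, a <= t <= b -> Rabs (g t) <= M.
Proof.
  intros Hab H.
  set (cl := fun t => Rmax a (Rmin b t)).
  assert (Hcl : forall t, a <= cl t <= b).
  { intro t; unfold cl. split; [apply Rmax_l|]. apply Rmax_lub; auto. apply Rmin_l. }
  assert (Hclid : forall t, a <= t <= b -> cl t = t).
  { intros t Ht; unfold cl. rewrite Rmin_right by lra. rewrite Rmax_right by lra. auto. }
  assert (Hcld : forall s t, a <= t <= b -> Rabs (cl s - t) <= Rabs (s - t)).
  { intros s t Ht. unfold cl. unfold Rmax, Rmin.
    destruct (Rle_dec b s); destruct (Rle_dec a _); unfold Rabs;
    repeat destruct Rcase_abs; lra. }
  destruct (continuity_ab_maj (fun t => Rabs (g (cl t))) a b Hab) as [Mx [HM _]].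
  - intros c Hc. unfold continuity_pt, continue_in, limit1_in, limit_in.
    intros eps He. destruct (H c Hc eps He) as [alp [Ha Hb]].
    exists alp; split; auto. intros x [_ Hx]. simpl in *. unfold R_dist in *.
    rewrite (Hclid c Hc).
    assert (Hx' : Rabs (cl x - c) < alp) by (pose proof (Hcld x c Hc); lra).
    specialize (Hb (cl x) (conj (Hcl x) Hx')).
    simpl in Hb. unfold R_dist in Hb.
    pose proof (Rabs_triang_inv (g (cl x)) (g c)).
    pose proof (Rabs_triang_inv (g c) (g (cl x))).
    rewrite Rabs_minus_sym in H1.
    unfold Rabs at 1. destruct Rcase_abs; lra.
  - exists (Rabs (g (cl Mx))). intros t Ht. specialize (HM t Ht). rewrite Hclid in HM; auto.
Qed.

Definition supset a b g := fun v => exists t, a <= t <= b /\ v = Rabs (g t).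

Lemma sup_norm_lub a b g : a <= b -> cont_on a b g -> is_lub (supset a b g) (sup_norm a b g).
Proof.
  intros Hab H. unfold sup_norm. apply epsilon_spec.
  destruct (cont_bounded a b g Hab H) as [M HM].
  destruct (completeness (supset a b g)) as [m Hm].
  - exists M. intros v [t [Ht ->]]. auto.
  - exists (Rabs (g a)). exists a. split; [lra|auto].
  - exists m; auto.
Qed.

Lemma sup_norm_ge a b g t : a <= b -> cont_on a b g -> a <= t <= b -> Rabs (g t) <= sup_norm a b g.
Proof. intros Hab H Ht. destruct (sup_norm_lub a b g Hab H) as [H1 _]. apply H1. exists t; auto. Qed.

Lemma sup_norm_le a b g B : a <= b -> cont_on a b g -> (forall t, a <= t <= b -> Rabs (g t) <= B) -> sup_norm a b g <= B.
Proof. intros Hab H HB. destruct (sup_norm_lub a b g Hab H) as [_ H2]. apply H2. intros v [t [Ht ->]]. auto. Qed.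

Lemma dlim_lin f g x l1 l2 u v : derivable_pt_lim f x l1 -> derivable_pt_lim g x l2 ->
  derivable_pt_lim (fun t => u * f t + v * g t) x (u * l1 + v * l2).
Proof.
  intros H1 H2. apply (derivable_pt_lim_plus (mult_real_fct u f) (mult_real_fct v g));
  apply derivable_pt_lim_scal; auto.
Qed.

Lemma dlim_aff f x l c d : derivable_pt_lim f (c * x + d) l ->
  derivable_pt_lim (fun t => f (c * t + d)) x (c * l).
Proof.
  intros H. rewrite Rmult_comm.
  apply (derivable_pt_lim_comp (fun t => c * t + d) f x c l); auto.
  assert (Hl : derivable_pt_lim (fun t => c * t + d * 1) x (c * 1 + d * 0)).
  { apply (dlim_lin (fun t => t) (fun _ => 1)). apply derivable_pt_lim_id. apply derivable_pt_lim_const. }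
  replace (fun t => c * t + d) with (fun t => c * t + d * 1) by (apply functional_extensionality; intro; ring).
  replace (c * 1 + d * 0) with c in Hl by ring. exact Hl.
Qed.

Definition TwoD (f f2 : R -> R) := exists g, (forall t, derivable_pt_lim f t (g t)) /\ (forall t, derivable_pt_lim g t (f2 t)).

Lemma TwoD_ext2 f f2 f2' : TwoD f f2 -> (forall t, f2 t = f2' t) -> TwoD f f2'.
Proof. intros [g [H1 H2]] E. exists g; split; auto. intro t; rewrite <- E; auto. Qed.

Lemma TwoD_ext1 f f' f2 : TwoD f f2 -> (forall t, f t = f' t) -> TwoD f' f2.
Proof. intros H E. replace f' with f; auto. apply functional_extensionality; auto. Qed.

Lemma TwoD_lin f f2 g g2 u v : TwoD f f2 -> TwoD g g2 ->
  TwoD (fun t => u * f t + v * g t) (fun t => u * f2 t + v * g2 t).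
Proof.
  intros [df [A1 A2]] [dg [B1 B2]]. exists (fun t => u * df t + v * dg t); split; intro t; apply dlim_lin; auto.
Qed.

Lemma TwoD_aff f f2 c d : TwoD f f2 -> TwoD (fun t => f (c * t + d)) (fun t => c * c * f2 (c * t + d)).
Proof.
  intros [g [A1 A2]]. exists (fun t => c * g (c * t + d)); split; intro t.
  - apply dlim_aff; auto.
  - rewrite Rmult_assoc.
    change (derivable_pt_lim (mult_real_fct c (fun t => g (c * t + d))) t (c * (c * f2 (c * t + d)))).
    apply derivable_pt_lim_scal. apply dlim_aff; auto.
Qed.

Lemma TwoD_const c : TwoD (fun _ => c) (fun _ => 0).
Proof. exists (fun _ => 0); split; intro; apply derivable_pt_lim_const. Qed.

Lemma TwoD_sum (F F2 : nat -> R -> R) p : (forall l, TwoD (F l) (F2 l)) ->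
  TwoD (fun t => sum_f_R0 (fun l => F l t) p) (fun t => sum_f_R0 (fun l => F2 l t) p).
Proof.
  intros H. induction p; simpl.
  - apply H.
  - pose proof (TwoD_lin _ _ _ _ 1 1 IHp (H (S p))).
    eapply TwoD_ext1; [eapply TwoD_ext2; [exact H0|]|]; intro t; simpl; ring.
Qed.

Definition Lt (Lam : nat -> R -> R) (l i : nat) (s : R) : R :=
  if Nat.leb i l then Lam (l - i)%nat s else 0.

Lemma TwoD_Lt Lam (HLam : lidstone_family Lam) l i : TwoD (Lt Lam l i) (Lt Lam l (S i)).
Proof.
  destruct HLam as [H0 HS]. unfold Lt.
  destruct (Nat.leb_spec i l); destruct (Nat.leb_spec (S i) l); try lia.
  - destruct (HS (l - S i)%nat) as [dL [A1 [A2 _]]]. exists dL.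
    replace (l - i)%nat with (S (l - S i)) by lia. split; auto.
  - assert (l = i) by lia. subst. rewrite Nat.sub_diag.
    exists (fun _ => 1); split; intro t.
    + replace (Lam 0%nat) with (fun s : R => s) by (apply functional_extensionality; intro; auto).
      apply derivable_pt_lim_id.
    + apply derivable_pt_lim_const.
  - apply TwoD_const.
Qed.

Definition Rfun (Lam : nat -> R -> R) (p : nat) (x : nat -> R) (N : nat) (y : nat -> nat -> R) (i : nat) (t : R) : R :=
  sum_f_R0 (fun l => (y 0%nat (2 * l)%nat * Lt Lam l i ((x N - t) / (x N - x 0%nat))
     + y N (2 * l)%nat * Lt Lam l i ((t - x 0%nat) / (x N - x 0%nat)))
     * (x N - x 0%nat) ^ (2 * l - 2 * i)%nat) p.

Lemma TwoD_Rfun Lam (HLam : lidstone_family Lam) p x N y i : x N - x 0%nat <> 0 ->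
  TwoD (Rfun Lam p x N y i) (Rfun Lam p x N y (S i)).
Proof.
  intros Hh. set (h := x N - x 0%nat) in *. unfold Rfun. fold h.
  set (c1 := - / h). set (d1 := x N / h). set (c2 := / h). set (d2 := - x 0%nat / h).
  assert (E1 : forall t, (x N - t) / h = c1 * t + d1) by (intro; unfold c1, d1; field; auto).
  assert (E2 : forall t, (t - x 0%nat) / h = c2 * t + d2) by (intro; unfold c2, d2; field; auto).
  set (F := fun l t => y 0%nat (2*l)%nat * h ^ (2 * l - 2 * i) * Lt Lam l i (c1 * t + d1)
     + y N (2*l)%nat * h ^ (2 * l - 2 * i) * Lt Lam l i (c2 * t + d2)).
  set (F2 := fun l t => y 0%nat (2*l)%nat * h ^ (2 * l - 2 * i) * (c1 * c1 * Lt Lam l (S i) (c1 * t + d1))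
     + y N (2*l)%nat * h ^ (2 * l - 2 * i) * (c2 * c2 * Lt Lam l (S i) (c2 * t + d2))).
  assert (HT : TwoD (fun t => sum_f_R0 (fun l => F l t) p) (fun t => sum_f_R0 (fun l => F2 l t) p)).
  { apply TwoD_sum. intro l. unfold F, F2.
    apply TwoD_lin; apply TwoD_aff; apply (TwoD_Lt Lam HLam l i). }
  eapply TwoD_ext1; [eapply TwoD_ext2; [exact HT|]|].
  - intro t. apply sum_eq. intros l _. unfold F2. rewrite <- E1, <- E2.
    unfold Lt. destruct (Nat.leb_spec (S i) l).
    + replace (2 * l - 2 * i)%nat with (2 + (2 * l - 2 * S i))%nat by lia.
      rewrite pow_add. unfold c1, c2. field. auto.
    + ring.
  - intro t. apply sum_eq. intros l _. unfold F. rewrite <- E1, <- E2. ring.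
Qed.

Lemma Rabs_le_btw x y : Rabs x <= y <-> - y <= x <= y.
Proof. unfold Rabs; destruct Rcase_abs; split; intros; lra. Qed.
Module CQ.
From Coquelicot Require Import Coquelicot.
Lemma TwoD_sinpi : TwoD (fun s => sin (PI * s)) (fun s => - (PI * PI) * sin (PI * s)).
Proof.
  exists (fun s => PI * cos (PI * s)); split; intro t; apply is_derive_Reals.
  - auto_derive; auto. ring.
  - auto_derive; auto. ring.
Qed.

Lemma TwoD_cub : TwoD (fun s => (s ^ 3 - s) / 6) (fun s => s).
Proof.
  exists (fun s => (3 * s ^ 2 - 1) / 6); split; intro t; apply is_derive_Reals.
  - auto_derive; auto. field.
  - auto_derive; auto. field.
Qed.

End CQ.
Import CQ.

Lemma maxp f h : TwoD f h -> (forall t, 0 <= t <= 1 -> 0 <= h t) -> f 0 <= 0 -> f 1 <= 0 ->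
  forall t, 0 <= t <= 1 -> f t <= 0.
Proof.
  intros [g [Hf Hg]] Hh H0 H1 t Ht.
  destruct (Req_dec t 0) as [->|Ht0]; auto.
  destruct (Req_dec t 1) as [->|Ht1]; auto.
  destruct (MVT_cor2 f g 0 t ltac:(lra) (fun c _ => Hf c)) as [c1 [E1 Hc1]].
  destruct (MVT_cor2 f g t 1 ltac:(lra) (fun c _ => Hf c)) as [c2 [E2 Hc2]].
  destruct (MVT_cor2 g h c1 c2 ltac:(lra) (fun c _ => Hg c)) as [c3 [E3 Hc3]].
  assert (0 <= h c3) by (apply Hh; lra).
  assert (g c1 <= g c2) by nra.
  assert (Q1 : f t = f 0 + g c1 * t) by lra.
  assert (Q2 : f t = f 1 - g c2 * (1 - t)) by lra.
  assert (E : (1-t)*f t + t * f t = (1-t)*(f 0 + g c1 * t) + t*(f 1 - g c2*(1-t))) by (rewrite <- Q1, <- Q2; ring).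
  assert (0 <= t * (1 - t) * (g c2 - g c1)) by (apply Rmult_le_pos; nra).
  nra.
Qed.

Lemma PI_ge3 : 3 < PI.
Proof. pose proof PI2_3_2. lra. Qed.

Lemma sin_lb3 a : 0 <= a <= PI -> a - a ^ 3 / 6 <= sin a.
Proof.
  intros Ha. destruct (sin_bound a 0 ltac:(lra) ltac:(lra)) as [H _].
  replace (a - a ^ 3 / 6) with (sin_approx a (2 * 0 + 1)); auto.
  unfold sin_approx, sin_term. simpl. field.
Qed.

Lemma PI_le : PI <= 33 / 10.
Proof.
  pose proof PI_4. pose proof PI_ge3.
  pose proof (sin_lb3 (PI / 6) ltac:(lra)). rewrite sin_PI6 in H1.
  set (a := PI / 6) in *. assert (a <= 2/3) by (unfold a; lra). assert (0 <= a) by (unfold a; lra).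
  assert (a <= 55/100) by nra. unfold a in *. lra.
Qed.

Section L.
Variable Lam : nat -> R -> R.
Hypothesis HLam : lidstone_family Lam.

Lemma Lam1_eq s : 0 <= s <= 1 -> Lam 1%nat s = (s ^ 3 - s) / 6.
Proof.
  intros Hs. destruct HLam as [H0 HS]. destruct (HS 0%nat) as [dL [A1 [A2 [A3 A4]]]].
  assert (T : TwoD (Lam 1%nat) (Lam 0%nat)) by (exists dL; split; auto).
  assert (T1 := TwoD_lin _ _ _ _ 1 (-1) T TwoD_cub).
  assert (T2 := TwoD_lin _ _ _ _ (-1) 1 T TwoD_cub).
  pose proof (maxp _ _ T1 ltac:(intros t _; cbv beta; rewrite H0; lra) ltac:(cbv beta; rewrite A3; simpl; lra)
    ltac:(cbv beta; rewrite A4; simpl; lra) s Hs).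
  pose proof (maxp _ _ T2 ltac:(intros t _; cbv beta; rewrite H0; lra) ltac:(cbv beta; rewrite A3; simpl; lra)
    ltac:(cbv beta; rewrite A4; simpl; lra) s Hs).
  simpl in *. lra.
Qed.

Lemma Lam1_bound s : 0 <= s <= 1 -> Rabs (Lam 1%nat s) <= / (3 * PI) * sin (PI * s).
Proof.
  intros Hs. rewrite Lam1_eq by auto.
  pose proof PI_le. pose proof PI_ge3.
  assert (Hp : 0 < PI) by lra.
  rewrite Rabs_left1 by (simpl; nra).
  apply (Rmult_le_reg_l (3 * PI)); [lra|].
  rewrite <- Rmult_assoc, Rinv_r, Rmult_1_l by lra.
  destruct (Rle_dec s (1/2)).
  - pose proof (sin_lb3 (PI * s) ltac:(nra)).
    assert (PI * PI <= 1089/100) by nra.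
    assert (s * s <= 1/4) by nra.
    assert (0 <= PI*s/2 * (1 + s*s - PI*PI*s*s/3)) by (apply Rmult_le_pos; nra).
    simpl in *. nra.
  - set (u := 1 - s). replace (PI * s) with (PI - PI * u) by (unfold u; ring).
    rewrite sin_PI_x.
    assert (0 <= u <= 1/2) by (unfold u; lra).
    pose proof (sin_lb3 (PI * u) ltac:(nra)).
    assert (PI * PI <= 1089/100) by nra.
    replace s with (1 - u) by (unfold u; ring).
    assert (0 <= PI*u*u*(3/2 - u/2 - PI*PI*u/6)) by (apply Rmult_le_pos; nra).
    simpl in *. nra.
Qed.

Definition Cm (m : nat) := / (3 * PI) * (/ (PI * PI)) ^ m.

Lemma LamS_bound m s : 0 <= s <= 1 -> Rabs (Lam (S m) s) <= Cm m * sin (PI * s).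
Proof.
  revert s. induction m; intros s Hs.
  - unfold Cm; simpl. rewrite Rmult_1_r. apply Lam1_bound; auto.
  - destruct HLam as [H0 HS]. destruct (HS (S m)) as [dL [A1 [A2 [A3 A4]]]].
    assert (T : TwoD (Lam (S (S m))) (Lam (S m))) by (exists dL; split; auto).
    pose proof PI_ge3.
    assert (E : Cm (S m) * (PI * PI) = Cm m) by (unfold Cm; simpl; field; lra).
    assert (T1 := TwoD_lin _ _ _ _ 1 (- Cm (S m)) T TwoD_sinpi).
    assert (T2 := TwoD_lin _ _ _ _ (-1) (- Cm (S m)) T TwoD_sinpi).
    assert (Hs0 : sin (PI * 0) = 0) by (rewrite Rmult_0_r; apply sin_0).
    assert (Hs1 : sin (PI * 1) = 0) by (rewrite Rmult_1_r; apply sin_PI).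
    pose proof (maxp _ _ T1 ltac:(intros t Ht; specialize (IHm t Ht); rewrite Rabs_le_btw in IHm; cbv beta; nra)
       ltac:(cbv beta; rewrite A3, Hs0; lra) ltac:(cbv beta; rewrite A4, Hs1; lra) s Hs).
    pose proof (maxp _ _ T2 ltac:(intros t Ht; specialize (IHm t Ht); rewrite Rabs_le_btw in IHm; cbv beta; nra)
       ltac:(cbv beta; rewrite A3, Hs0; lra) ltac:(cbv beta; rewrite A4, Hs1; lra) s Hs).
    simpl in *. apply Rabs_le_btw. lra.
Qed.

Lemma Lam_bound m s : 0 <= s <= 1 -> Rabs (Lam m s) <= PI / 3 * (/ PI) ^ (2 * m).
Proof.
  intros Hs. pose proof PI_ge3. destruct m.
  - destruct HLam as [H0 _]. rewrite H0. simpl. rewrite Rabs_right by lra. lra.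
  - eapply Rle_trans; [apply LamS_bound; auto|].
    pose proof (SIN_bound (PI * s)).
    assert (0 <= sin (PI * s)) by (apply sin_ge_0; nra).
    assert (0 < Cm m) by (unfold Cm; apply Rmult_lt_0_compat; [apply Rinv_0_lt_compat; lra|apply pow_lt; apply Rinv_0_lt_compat; nra]).
    replace (PI / 3 * (/ PI) ^ (2 * S m)) with (Cm m).
    + nra.
    + unfold Cm. replace (2 * S m)%nat with (S (S (2 * m))) by lia.
      rewrite <- tech_pow_Rmult, <- tech_pow_Rmult, pow_mult.
      replace ((/ PI) ^ 2) with (/ (PI * PI)) by (simpl; field; lra).
      field. lra.
Qed.
End L.

Lemma max_1_ge f N n : (1 <= n <= N)%nat -> f n <= max_1_to f N.
Proof.
  induction N; intros Hn; [lia|].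
  destruct N.
  - assert (n = 1%nat) by lia. subst. simpl. lra.
  - change (max_1_to f (S (S N))) with (Rmax (max_1_to f (S N)) (f (S (S N)))).
    destruct (Nat.eq_dec n (S (S N))).
    + subst. apply Rmax_r.
    + eapply Rle_trans; [apply IHN; lia|apply Rmax_l].
Qed.

Lemma min_1_le f N n : (1 <= n <= N)%nat -> min_1_to f N <= f n.
Proof.
  induction N; intros Hn; [lia|].
  destruct N.
  - assert (n = 1%nat) by lia. subst. simpl. lra.
  - change (min_1_to f (S (S N))) with (Rmin (min_1_to f (S N)) (f (S (S N)))).
    destruct (Nat.eq_dec n (S (S N))).
    + subst. apply Rmin_r.
    + eapply Rle_trans; [apply Rmin_l|apply IHN; lia].
Qed.

Lemma min_1_pos f N : (1 <= N)%nat -> (forall n, (1 <= n <= N)%nat -> 0 < f n) -> 0 < min_1_to f N.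
Proof.
  induction N; intros HN H; [lia|].
  destruct N.
  - simpl. apply H. lia.
  - change (min_1_to f (S (S N))) with (Rmin (min_1_to f (S N)) (f (S (S N)))).
    apply Rmin_glb_lt; [apply IHN; [lia|intros n Hn; apply H; lia]|apply H; lia].
Qed.

Lemma max_0_ge f p k : (k <= p)%nat -> f k <= max_0_to f p.
Proof.
  induction p; intros Hk.
  - assert (k = 0%nat) by lia. subst. simpl. lra.
  - simpl. destruct (Nat.eq_dec k (S p)).
    + subst. apply Rmax_r.
    + eapply Rle_trans; [apply IHp; lia|apply Rmax_l].
Qed.

Section X.
Variable N : nat.
Variable x : nat -> R.
Hypothesis Hx : forall n : nat, (n < N)%nat -> x n < x (S n).

Lemma x_mono i j : (i <= j <= N)%nat -> x i <= x j.
Proof.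
  intros H. induction j.
  - assert (i = 0%nat) by lia. subst; lra.
  - destruct (Nat.eq_dec i (S j)). { subst; lra. }
    eapply Rle_trans; [apply IHj; lia|]. left; apply Hx; lia.
Qed.

Lemma x_cover z : (1 <= N)%nat -> x 0%nat <= z <= x N ->
  exists n, (1 <= n <= N)%nat /\ x (n - 1)%nat <= z <= x n.
Proof.
  intros HN Hz.
  assert (G : forall M, (1 <= M <= N)%nat -> z <= x M -> exists n, (1 <= n <= M)%nat /\ x (n - 1)%nat <= z <= x n).
  { induction M; intros HM HzM; [lia|].
    destruct M.
    - exists 1%nat. simpl. split; [lia|lra].
    - destruct (Rle_dec z (x (S M))).
      + destruct (IHM ltac:(lia) r) as [n [Hn1 Hn2]]. exists n; split; auto; lia.
      + exists (S (S M)). split; [lia|]. replace (S (S M) - 1)%nat with (S M) by lia. lra. }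
  apply (G N); [lia|lra].
Qed.
End X.

Lemma deriv_on_ext2 a b F G G' : deriv_on a b F G -> (forall t, a <= t <= b -> G t = G' t) -> deriv_on a b F G'.
Proof. intros H E t Ht. rewrite <- E by auto. apply H; auto. Qed.

Lemma cont_on_minus a b f g : cont_on a b f -> cont_on a b g -> cont_on a b (fun t => f t - g t).
Proof. intros Hf Hg t Ht. apply limit_minus; auto. Qed.

Lemma sum_lin3 (A B C : nat -> R) c p : (forall l, A l - B l = c * C l) ->
  sum_f_R0 A p - sum_f_R0 B p = c * sum_f_R0 C p.
Proof. intros H. induction p; simpl. - apply H. - pose proof (H (S p)). rewrite Rmult_plus_distr_l, <- IHp. lra. Qed.

Lemma sum_shift (g : nat -> R) k q :
  sum_f_R0 (fun l => if Nat.leb k l then g (l - k)%nat else 0) (k + q) = sum_f_R0 g q.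
Proof.
  set (f := fun l => if Nat.leb k l then g (l - k)%nat else 0).
  assert (Z : forall m, (m < k)%nat -> sum_f_R0 f m = 0).
  { induction m; intros Hm; simpl; unfold f at 2 || unfold f.
    - destruct (Nat.leb_spec k 0); [lia|auto].
    - rewrite IHm by lia. destruct (Nat.leb_spec k (S m)); [lia|ring]. }
  induction q.
  - rewrite Nat.add_0_r. destruct k.
    + simpl. unfold f. simpl. auto.
    + simpl. rewrite Z by lia. unfold f. destruct (Nat.leb_spec (S k) (S k)); [|lia].
      rewrite Nat.sub_diag. ring.
  - replace (k + S q)%nat with (S (k + q)) by lia. simpl. rewrite IHq. unfold f.
    destruct (Nat.leb_spec k (S (k + q))); [|lia]. replace (S (k + q) - k)%nat with (S q) by lia. auto.
Qed.

Lemma deriv_on_lin4 a b f1 f1' f2 f2' f3 f3' f4 f4' k1 k2 k3 k4 :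
  deriv_on a b f1 f1' -> deriv_on a b f2 f2' -> deriv_on a b f3 f3' -> deriv_on a b f4 f4' ->
  deriv_on a b (fun t => k1 * f1 t + k2 * f2 t + k3 * f3 t + k4 * f4 t)
    (fun t => k1 * f1' t + k2 * f2' t + k3 * f3' t + k4 * f4' t).
Proof.
  intros H1 H2 H3 H4.
  pose proof (deriv_on_lin _ _ _ _ _ _ 1 k4 (deriv_on_lin _ _ _ _ _ _ 1 k3 (deriv_on_lin _ _ _ _ _ _ k1 k2 H1 H2) H3) H4) as H.
  eapply deriv_on_ext2; [eapply deriv_on_ext; [exact H|]|].
  - intros t _. cbv beta. ring.
  - intros t _. cbv beta. ring.
Qed.

Lemma Rfun_bound Lam (HLam : lidstone_family Lam) p x N y k t : (k <= p)%nat ->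
  x 0%nat < x N -> x 0%nat <= t <= x N ->
  Rabs (Rfun Lam p x N y k t) <= M_const p k x N y.
Proof.
  intros Hk Hab Ht. set (h := x N - x 0%nat). assert (Hh : 0 < h) by (unfold h; lra).
  pose proof PI_ge3.
  set (g := fun m => 2 * rho p N y * PI / 3 * (h / PI) ^ (2 * m)).
  assert (HM : M_const p k x N y = sum_f_R0 (fun l => if Nat.leb k l then g (l - k)%nat else 0) p).
  { replace p with (k + (p - k))%nat at 2 by lia. rewrite sum_shift. unfold M_const, g.
    rewrite scal_sum. apply sum_eq. intros. fold h. ring. }
  rewrite HM. unfold Rfun. eapply Rle_trans; [apply sum_f_R0_triangle|].
  apply sum_Rle. intros l Hl. fold h.
  assert (s1 : 0 <= (x N - t) / h <= 1).
  { split; [apply Rle_mult_inv_pos; lra|]. apply (Rmult_le_reg_r h); auto. unfold Rdiv; rewrite Rmult_assoc, Rinv_l; unfold h in *; lra. }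
  assert (s2 : 0 <= (t - x 0%nat) / h <= 1).
  { split; [apply Rle_mult_inv_pos; lra|]. apply (Rmult_le_reg_r h); auto. unfold Rdiv; rewrite Rmult_assoc, Rinv_l; unfold h in *; lra. }
  assert (Hr0 : Rabs (y 0%nat (2 * l)%nat) <= rho p N y).
  { unfold rho. eapply Rle_trans; [|apply (max_0_ge (fun k => Rmax (Rabs (y 0%nat (2 * k)%nat)) (Rabs (y N (2 * k)%nat))) p l); lia].
    apply Rmax_l. }
  assert (HrN : Rabs (y N (2 * l)%nat) <= rho p N y).
  { unfold rho. eapply Rle_trans; [|apply (max_0_ge (fun k => Rmax (Rabs (y 0%nat (2 * k)%nat)) (Rabs (y N (2 * k)%nat))) p l); lia].
    apply Rmax_r. }
  unfold Lt. destruct (Nat.leb_spec k l).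
  - pose proof (Lam_bound Lam HLam (l - k) _ s1) as B1.
    pose proof (Lam_bound Lam HLam (l - k) _ s2) as B2.
    set (e := PI / 3 * (/ PI) ^ (2 * (l - k))) in *.
    replace (2 * l - 2 * k)%nat with (2 * (l - k))%nat by lia.
    unfold g; cbv beta.
    replace ((h / PI) ^ (2*(l-k))) with (h^(2*(l-k)) * (/PI)^(2*(l-k))) by (unfold Rdiv; rewrite Rpow_mult_distr; ring).
    set (H2 := h ^ (2 * (l - k))). assert (0 <= H2) by (apply pow_le; lra).
    rewrite Rabs_mult, (Rabs_right H2) by lra.
    assert (Rabs (y 0%nat (2 * l)%nat * Lam (l - k)%nat ((x N - t) / h) + y N (2 * l)%nat * Lam (l - k)%nat ((t - x 0%nat) / h)) <= 2 * rho p N y * e).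
    { eapply Rle_trans; [apply Rabs_triang|]. rewrite !Rabs_mult.
      pose proof (Rabs_pos (y 0%nat (2 * l)%nat)). pose proof (Rabs_pos (y N (2 * l)%nat)).
      pose proof (Rabs_pos (Lam (l - k)%nat ((x N - t) / h))). pose proof (Rabs_pos (Lam (l - k)%nat ((t - x 0%nat) / h))).
      assert (Rabs (y 0%nat (2 * l)%nat) * Rabs (Lam (l - k)%nat ((x N - t) / h)) <= rho p N y * e) by (apply Rmult_le_compat; auto).
      assert (Rabs (y N (2 * l)%nat) * Rabs (Lam (l - k)%nat ((t - x 0%nat) / h)) <= rho p N y * e) by (apply Rmult_le_compat; auto).
      lra. }
    unfold e in *. apply Rle_trans with (2 * rho p N y * (PI / 3 * (/ PI) ^ (2 * (l - k))) * H2).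
    + apply Rmult_le_compat_r; auto.
    + apply Req_le. unfold Rdiv. ring_simplify. reflexivity.
  - rewrite !Rmult_0_r, Rplus_0_r, Rmult_0_l, Rabs_R0. lra.
Qed.

Theorem theorem4p3
  (Lam : nat -> R -> R) (HLam : lidstone_family Lam)
  (p N : nat) (HN : (1 <= N)%nat)
  (x : nat -> R) (Hx : forall n : nat, (n < N)%nat -> x n < x (S n))
  (y : nat -> nat -> R)
  (al1 al2 : nat -> R)
  (Hal1 : in_Theta p x N al1) (Hal2 : in_Theta p x N al2)
  (l1 l2 : R -> R) (D1 D2 : nat -> R -> R)
  (Hl1 : Cn_derivs (2 * p)%nat (x 0%nat) (x N) l1 D1)
  (Hl2 : Cn_derivs (2 * p)%nat (x 0%nat) (x N) l2 D2)
  (Hf1 : lidstone_FIF_eq Lam p x N y al1 l1)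
  (Hf2 : lidstone_FIF_eq Lam p x N y al2 l2)
  (k : nat) (Hk : (1 <= k <= p)%nat)
  (Hden : vnorm N al1 < (min_1_to (a_coef x N) N) ^ (2 * k)%nat) :
  sup_norm (x 0%nat) (x N) (fun t => D1 (2 * k)%nat t - D2 (2 * k)%nat t)
  <= vnorm N (fun n => al1 n - al2 n)
       / ((min_1_to (a_coef x N) N) ^ (2 * k)%nat - vnorm N al1)
     * (sup_norm (x 0%nat) (x N) (D2 (2 * k)%nat) + M_const p k x N y).
Proof.
  assert (Hab : x 0%nat < x N).
  { apply Rlt_le_trans with (x 1%nat). apply Hx; lia. apply (x_mono N x Hx); lia. }
  assert (Hh : x N - x 0%nat <> 0) by lra.
  assert (Hxm : forall m, (m <= N)%nat -> x 0%nat <= x m <= x N) by (intros; split; apply (x_mono N x Hx); lia).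
  assert (Hc : forall n, (1 <= n <= N)%nat -> 0 < a_coef x N n).
  { intros n Hn. unfold a_coef. apply Rdiv_lt_0_compat; [|lra].
    pose proof (Hx (n-1)%nat ltac:(lia)) as H. replace (S (n-1)) with n in H by lia. lra. }
  assert (HLid : forall n t, L_map x N n t = x (n-1)%nat + a_coef x N n * (t - x 0%nat)).
  { intros. unfold L_map, a_coef. field. auto. }
  assert (HLI : forall n t, (1 <= n <= N)%nat -> x 0%nat <= t <= x N -> x 0%nat <= L_map x N n t <= x N).
  { intros n t Hn Ht. rewrite HLid. pose proof (Hc n Hn).
    assert (a_coef x N n * (t - x 0%nat) <= a_coef x N n * (x N - x 0%nat)) by (apply Rmult_le_compat_l; lra).
    assert (a_coef x N n * (x N - x 0%nat) = x n - x (n-1)%nat) by (unfold a_coef; field; auto).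
    assert (0 <= a_coef x N n * (t - x 0%nat)) by (apply Rmult_le_pos; lra).
    pose proof (Hxm (n-1)%nat ltac:(lia)). pose proof (Hxm n ltac:(lia)). lra. }
  destruct Hl1 as [H10 [H1d H1c]]. destruct Hl2 as [H20 [H2d H2c]].
  assert (KEY : forall n, (1 <= n <= N)%nat -> forall t, x 0%nat <= t <= x N ->
     a_coef x N n ^ (2 * k) * (D1 (2 * k)%nat (L_map x N n t) - D2 (2 * k)%nat (L_map x N n t))
     = al1 n * (D1 (2 * k)%nat t - D2 (2 * k)%nat t)
       + (al1 n - al2 n) * (D2 (2 * k)%nat t - Rfun Lam p x N y k t)).
  { intros n Hn.
    set (c := a_coef x N n). set (d := (x N * x (n - 1)%nat - x 0%nat * x n) / (x N - x 0%nat)).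
    assert (HL : forall t, L_map x N n t = c * t + d) by reflexivity.
    assert (Hcp : 0 < c) by (apply Hc; auto).
    assert (HLI' : forall t, x 0%nat <= t <= x N -> x 0%nat <= c * t + d <= x N).
    { intros t Ht. rewrite <- HL. apply HLI; auto. }
    set (Ff := fun K j t => K * (D1 j (c * t + d) - D2 j (c * t + d)) - al1 n * (D1 j t - D2 j t)
                 - (al1 n - al2 n) * D2 j t).
    assert (DF : forall K j, (j < 2 * p)%nat -> deriv_on (x 0%nat) (x N) (Ff K j) (Ff (K * c) (S j))).
    { intros K j Hj.
      pose proof (deriv_on_comp_aff _ _ _ _ c d Hcp HLI' (H1d j Hj)) as A1.
      pose proof (deriv_on_comp_aff _ _ _ _ c d Hcp HLI' (H2d j Hj)) as A2.
      pose proof (deriv_on_lin4 _ _ _ _ _ _ _ _ _ _ K (-K) (- al1 n) (al1 n - (al1 n - al2 n)) A1 A2 (H1d j Hj) (H2d j Hj)) as A.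
      eapply deriv_on_ext2; [eapply deriv_on_ext; [exact A|]|].
      - intros t _. unfold Ff. cbv beta. ring.
      - intros t _. unfold Ff. cbv beta. ring. }
    assert (IND : forall i, (i <= k)%nat -> forall t, x 0%nat <= t <= x N ->
       Ff (c ^ (2 * i)) (2 * i)%nat t = - (al1 n - al2 n) * Rfun Lam p x N y i t).
    { induction i; intros Hi t Ht.
      - unfold Ff. simpl (2 * 0)%nat. rewrite pow_O.
        rewrite !H10, !H20 by auto. rewrite <- HL.
        rewrite (Hf1 n Hn t Ht), (Hf2 n Hn t Ht).
        assert (Q : q_fun Lam p x N y al1 n t - q_fun Lam p x N y al2 n t = - (al1 n - al2 n) * Rfun Lam p x N y 0 t).
        { unfold q_fun, Rfun. apply sum_lin3. intro l. unfold Lt. simpl (Nat.leb 0 l).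
          rewrite !Nat.sub_0_r. replace (2 * l - 2 * 0)%nat with (2 * l)%nat by lia. generalize (a_coef x N n ^ (2 * l)) ((x N - x 0%nat) ^ (2 * l)); intros. ring. }
        lra.
      - assert (Hi' : (i <= k)%nat) by lia. specialize (IHi Hi').
        destruct (TwoD_Rfun Lam HLam p x N y i Hh) as [g [Gd1 Gd2]].
        set (v := al1 n - al2 n).
        assert (E1 : deriv_on (x 0%nat) (x N) (Ff (c ^ (2 * i)) (2 * i)%nat) (fun t => - v * g t)).
        { eapply deriv_on_ext; [|intros s Hs; symmetry; apply IHi; auto].
          apply deriv_on_global. intro s.
          change (derivable_pt_lim (mult_real_fct (- v) (Rfun Lam p x N y i)) s (- v * g s)).
          apply derivable_pt_lim_scal. auto. }
        assert (U1 : forall s, x 0%nat <= s <= x N -> Ff (c ^ (2 * i) * c) (S (2 * i)) s = - v * g s).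
        { apply (deriv_on_unique _ _ _ _ _ Hab (DF (c ^ (2 * i)) (2 * i)%nat ltac:(lia)) E1). }
        assert (E2 : deriv_on (x 0%nat) (x N) (Ff (c ^ (2 * i) * c) (S (2 * i))) (fun t => - v * Rfun Lam p x N y (S i) t)).
        { eapply deriv_on_ext; [|intros s Hs; symmetry; apply U1; auto].
          apply deriv_on_global. intro s.
          change (derivable_pt_lim (mult_real_fct (- v) g) s (- v * Rfun Lam p x N y (S i) s)).
          apply derivable_pt_lim_scal. auto. }
        pose proof (deriv_on_unique _ _ _ _ _ Hab (DF (c ^ (2 * i) * c) (S (2 * i)) ltac:(lia)) E2 t Ht) as U2.
        replace (2 * S i)%nat with (S (S (2 * i))) by lia.
        replace (c ^ S (S (2 * i))) with (c ^ (2 * i) * c * c) by (simpl; ring).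
        exact U2. }
    intros t Ht. pose proof (IND k (le_n k) t Ht) as I. unfold Ff in I. rewrite HL. fold c. lra. }
  set (mu := min_1_to (a_coef x N) N) in *.
  assert (Hmu : 0 < mu) by (apply min_1_pos; auto).
  assert (Hmun : forall n, (1 <= n <= N)%nat -> mu <= a_coef x N n) by (intros; apply min_1_le; auto).
  set (V1 := vnorm N al1) in *. set (V := vnorm N (fun n => al1 n - al2 n)).
  assert (HV1 : forall n, (1 <= n <= N)%nat -> Rabs (al1 n) <= V1).
  { intros n Hn. unfold V1, vnorm. apply (max_1_ge (fun n => Rabs (al1 n))); auto. }
  assert (HV : forall n, (1 <= n <= N)%nat -> Rabs (al1 n - al2 n) <= V).
  { intros n Hn. unfold V, vnorm. apply (max_1_ge (fun n => Rabs (al1 n - al2 n))); auto. }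
  assert (C1 : cont_on (x 0%nat) (x N) (D1 (2 * k)%nat)).
  { destruct (Nat.eq_dec k p). { subst; auto. } apply deriv_on_cont with (D1 (S (2 * k))). apply H1d; lia. }
  assert (C2 : cont_on (x 0%nat) (x N) (D2 (2 * k)%nat)).
  { destruct (Nat.eq_dec k p). { subst; auto. } apply deriv_on_cont with (D2 (S (2 * k))). apply H2d; lia. }
  assert (CE := cont_on_minus _ _ _ _ C1 C2).
  set (S1 := sup_norm (x 0%nat) (x N) (fun t => D1 (2 * k)%nat t - D2 (2 * k)%nat t)).
  set (S2 := sup_norm (x 0%nat) (x N) (D2 (2 * k)%nat)).
  set (M := M_const p k x N y).
  assert (HS1 : forall t, x 0%nat <= t <= x N -> Rabs (D1 (2 * k)%nat t - D2 (2 * k)%nat t) <= S1).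
  { intros t Ht. apply (sup_norm_ge _ _ (fun t => D1 (2 * k)%nat t - D2 (2 * k)%nat t)); auto; lra. }
  assert (HS2 : forall t, x 0%nat <= t <= x N -> Rabs (D2 (2 * k)%nat t) <= S2).
  { intros t Ht. apply sup_norm_ge; auto; lra. }
  assert (HR : forall t, x 0%nat <= t <= x N -> Rabs (Rfun Lam p x N y k t) <= M).
  { intros t Ht. apply Rfun_bound; auto; lia. }
  assert (Hmk : 0 < mu ^ (2 * k)) by (apply pow_lt; auto).
  assert (BND : forall z, x 0%nat <= z <= x N ->
     Rabs (D1 (2 * k)%nat z - D2 (2 * k)%nat z) <= (V1 * S1 + V * (S2 + M)) / mu ^ (2 * k)).
  { intros z Hz. destruct (x_cover N x z HN Hz) as [n [Hn Hzn]].
    pose proof (Hc n Hn) as Hcn.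
    set (c := a_coef x N n) in *.
    set (t := x 0%nat + (z - x (n - 1)%nat) / c).
    assert (Hct : c * (x N - x 0%nat) = x n - x (n-1)%nat) by (unfold c, a_coef; field; auto).
    assert (Ht : x 0%nat <= t <= x N).
    { unfold t. split.
      - assert (0 <= (z - x (n - 1)%nat) / c) by (apply Rle_mult_inv_pos; lra). lra.
      - assert ((z - x (n - 1)%nat) / c <= x N - x 0%nat).
        { apply (Rmult_le_reg_l c); auto. unfold Rdiv. rewrite <- Rmult_assoc, (Rmult_comm c), Rmult_assoc, Rinv_r by lra. lra. }
        lra. }
    assert (HLz : L_map x N n t = z) by (rewrite HLid; fold c; unfold t; field; lra).
    pose proof (KEY n Hn t Ht) as K. rewrite HLz in K. fold c in K.
    assert (Hck : mu ^ (2 * k) <= c ^ (2 * k)) by (apply pow_incr; split; [lra|apply Hmun; auto]).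
    assert (Hcpk : 0 < c ^ (2 * k)) by (apply pow_lt; auto).
    assert (RB : Rabs (al1 n * (D1 (2 * k)%nat t - D2 (2 * k)%nat t) + (al1 n - al2 n) * (D2 (2 * k)%nat t - Rfun Lam p x N y k t))
                 <= V1 * S1 + V * (S2 + M)).
    { eapply Rle_trans; [apply Rabs_triang|]. rewrite !Rabs_mult.
      apply Rplus_le_compat; apply Rmult_le_compat; try apply Rabs_pos; auto.
      eapply Rle_trans; [apply Rabs_triang|]. rewrite Rabs_Ropp. apply Rplus_le_compat; auto. }
    rewrite <- K in RB. rewrite Rabs_mult, (Rabs_right (c ^ (2 * k))) in RB by lra.
    apply (Rmult_le_reg_l (mu ^ (2 * k))); auto.
    replace (mu ^ (2 * k) * ((V1 * S1 + V * (S2 + M)) / mu ^ (2 * k))) with (V1 * S1 + V * (S2 + M)) by (field; lra).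
    eapply Rle_trans; [|exact RB]. apply Rmult_le_compat_r; auto. apply Rabs_pos. }
  assert (HS : S1 <= (V1 * S1 + V * (S2 + M)) / mu ^ (2 * k)).
  { apply sup_norm_le; auto. lra. }
  assert (HS' : S1 * mu ^ (2 * k) <= V1 * S1 + V * (S2 + M)).
  { apply (Rmult_le_compat_r (mu ^ (2 * k))) in HS; [|lra].
    replace ((V1 * S1 + V * (S2 + M)) / mu ^ (2 * k) * mu ^ (2 * k)) with (V1 * S1 + V * (S2 + M)) in HS by (field; lra). exact HS. }
  apply (Rmult_le_reg_r (mu ^ (2 * k) - V1)); [lra|].
  replace (V / (mu ^ (2 * k) - V1) * (S2 + M) * (mu ^ (2 * k) - V1)) with (V * (S2 + M)) by (field; lra).
  lra.
Qed.
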